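(* For any irrational number $\alpha \in \mathbb{R}\setminus\mathbb{Q}$, there are infinitely many fractions $\frac{P}{4Q}$, with $P$ an odd integer and $Q$ a positive integer, $P$ and $Q$ relatively prime, such that $$\left| \alpha - \frac{P}{4Q} \right| < \frac{1}{4Q^2}.$$ *)

(* Defs.v *)
From Stdlib Require Import Reals ZArith List Znumtheory.
Open Scope R_scope.

Definition irrational (x : R) : Prop :=
  ~ exists (p q : Z), q <> 0%Z /\ x = IZR p / IZR q.

Definition good_fraction (alpha r : R) : Prop :=
  exists (P Q : Z), Z.odd P = true /\ (Q > 0)%Z /\ rel_prime P Q /\
    r = IZR P / (4 * IZR Q) /\
    Rabs (alpha - IZR P / (4 * IZR Q)) < 1 / (4 * IZR Q ^ 2).

(* Main.v *)
Require Import Defs.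
From Stdlib Require Import Reals ZArith List Znumtheory Lra Lia Psatz.
Open Scope R_scope.

Definition st (x : R) (a b c d : Z) :=
  (1 <= b)%Z /\ (1 <= d)%Z /\ IZR a < IZR b * x /\ IZR d * x < IZR c /\
  (b * c - a * d = 1)%Z.

Lemma st_right x a b c d : st x a b c d -> IZR c - IZR d * x < 1 / IZR b.
Proof.
  intros [Hb [Hd [H1 [H2 H3]]]].
  apply IZR_le in Hb. apply IZR_le in Hd.
  assert (E : IZR b * IZR c - IZR a * IZR d = 1).
  { rewrite <- mult_IZR, <- mult_IZR, <- minus_IZR, H3. reflexivity. }
  assert (IZR b * (IZR c - IZR d * x) < 1) by nra.
  apply (Rmult_lt_reg_l (IZR b)); [lra|].
  replace (IZR b * (1 / IZR b)) with 1 by (field; lra). lra.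
Qed.

Lemma st_left x a b c d : st x a b c d -> IZR b * x - IZR a < 1 / IZR d.
Proof.
  intros [Hb [Hd [H1 [H2 H3]]]].
  apply IZR_le in Hb. apply IZR_le in Hd.
  assert (E : IZR b * IZR c - IZR a * IZR d = 1).
  { rewrite <- mult_IZR, <- mult_IZR, <- minus_IZR, H3. reflexivity. }
  assert (IZR d * (IZR b * x - IZR a) < 1) by nra.
  apply (Rmult_lt_reg_l (IZR d)); [lra|].
  replace (IZR d * (1 / IZR d)) with 1 by (field; lra). lra.
Qed.

Lemma floor_lemma u v : 0 < u -> 0 < v ->
  exists k : Z, (0 <= k)%Z /\ IZR k * u <= v /\ v < (IZR k + 1) * u.
Proof.
  intros Hu Hv.
  destruct (archimed (v / u)) as [A1 A2].
  assert (0 < v / u) by (apply Rdiv_lt_0_compat; lra).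
  exists (up (v / u) - 1)%Z.
  assert (0 < up (v/u))%Z by (apply lt_IZR; lra).
  rewrite minus_IZR. split; [lia|].
  assert (v = (v / u) * u) by (field; lra).
  split; nra.
Qed.

Section Irr.
Variable x : R.
Hypothesis Hx : forall p q : Z, q <> 0%Z -> IZR q * x <> IZR p.

Lemma stepA a b c d : st x a b c d ->
  exists a' b' c' d', st x a' b' c' d' /\ (d' <= b')%Z /\ (d <= d')%Z /\
    (b + d <= b')%Z.
Proof.
  intros S. pose proof S as [Hb [Hd [H1 [H2 H3]]]].
  destruct (floor_lemma (IZR b * x - IZR a) (IZR c - IZR d * x)) as
    [k [Hk [K1 K2]]]; try lra.
  assert (K3 : IZR k * (IZR b * x - IZR a) <> IZR c - IZR d * x).
  { intro E. apply (Hx (c + k * a) (d + k * b)); [nia|].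
    rewrite !plus_IZR, !mult_IZR. nra. }
  assert (K4 : IZR k * (IZR b * x - IZR a) < IZR c - IZR d * x)
    by (destruct K1; [auto|contradiction]).
  exists ((k+1)*a + c)%Z, ((k+1)*b + d)%Z, (k*a+c)%Z, (k*b+d)%Z.
  unfold st; repeat split; try nia.
  - repeat rewrite ?plus_IZR, ?mult_IZR. nra.
  - repeat rewrite ?plus_IZR, ?mult_IZR. nra.
Qed.

Lemma stepB a b c d : st x a b c d ->
  exists a' b' c' d', st x a' b' c' d' /\ (b' <= d')%Z /\ (b <= b')%Z /\
    (b + d <= d')%Z /\ (b' * c - a' * d = 1)%Z.
Proof.
  intros S. pose proof S as [Hb [Hd [H1 [H2 H3]]]].
  destruct (floor_lemma (IZR c - IZR d * x) (IZR b * x - IZR a)) as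
    [j [Hj [K1 K2]]]; try lra.
  assert (K3 : IZR j * (IZR c - IZR d * x) <> IZR b * x - IZR a).
  { intro E. apply (Hx (a + j * c) (b + j * d)); [nia|].
    rewrite !plus_IZR, !mult_IZR. nra. }
  assert (K4 : IZR j * (IZR c - IZR d * x) < IZR b * x - IZR a)
    by (destruct K1; [auto|contradiction]).
  exists (a + j*c)%Z, (b + j*d)%Z, (a + (j+1)*c)%Z, (b+(j+1)*d)%Z.
  unfold st; repeat split; try nia.
  - repeat rewrite ?plus_IZR, ?mult_IZR. nra.
  - repeat rewrite ?plus_IZR, ?mult_IZR. nra.
Qed.

Lemma big n : exists a b c d, st x a b c d /\ (Z.of_nat n <= b)%Z /\
  (Z.of_nat n <= d)%Z.
Proof.
  induction n as [|n IH].
  - destruct (archimed x) as [A1 A2].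
    exists (up x - 1)%Z, 1%Z, (up x)%Z, 1%Z.
    assert (IZR (up x - 1) <> x).
    { intro E. apply (Hx (up x - 1) 1); [lia|]. rewrite E. ring. }
    unfold st; rewrite minus_IZR in *. repeat split; try lia; try lra.
  - destruct IH as [a [b [c [d [S [Hb Hd]]]]]].
    destruct (stepA a b c d S) as [a' [b' [c' [d' [S' [E1 [E2 E3]]]]]]].
    destruct (stepB a' b' c' d' S') as
      [a'' [b'' [c'' [d'' [S'' [F1 [F2 [F3 F4]]]]]]]].
    exists a'', b'', c'', d''. pose proof S as [? [? _]].
    pose proof S' as [? [? _]]. split; [exact S''|]. lia.
Qed.

Lemma good n : exists P Q, Z.odd P = true /\ (Z.of_nat n <= Q)%Z /\ (1 <= Q)%Z
  /\ rel_prime P Q /\ Rabs (IZR Q * x - IZR P) < 1 / IZR Q.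
Proof.
  destruct (big n) as [a [b [c [d [S [Hb Hd]]]]]].
  destruct (stepA a b c d S) as [a' [b' [c' [d' [S' [E1 [E2 E3]]]]]]].
  destruct (stepB a' b' c' d' S') as
    [a'' [b'' [c'' [d'' [S'' [F1 [F2 [F3 F4]]]]]]]].
  pose proof S as [Sb [Sd _]].
  pose proof S' as [Tb [Td [T1 [T2 T3]]]].
  pose proof S'' as [Ub [Ud [U1 [U2 U3]]]].
  destruct (Z.odd c') eqn:Oc.
  - exists c', d'. split; [auto|split; [lia|split; [lia|split]]].
    + apply bezout_rel_prime. apply (Bezout_intro _ _ _ b' (- a')%Z). lia.
    + pose proof (st_right _ _ _ _ _ S').
      rewrite Rabs_left1 by lra.
      assert (1 / IZR b' <= 1 / IZR d').
      { unfold Rdiv; rewrite !Rmult_1_l. apply Rinv_le_contravar.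
        apply IZR_lt; lia. apply IZR_le; lia. }
      lra.
  - assert (Oa : Z.odd a'' = true).
    { destruct (Z.odd a'') eqn:Oa; auto.
      assert (Z.odd (b'' * c' - a'' * d') = Z.odd 1) by (rewrite F4; auto).
      rewrite Z.odd_sub, !Z.odd_mul, Oc, Oa in H.
      rewrite Bool.andb_false_r in H. simpl in H. discriminate. }
    exists a'', b''. split; [auto|split; [lia|split; [lia|split]]].
    + apply bezout_rel_prime. apply (Bezout_intro _ _ _ (- d'')%Z c''). lia.
    + pose proof (st_left _ _ _ _ _ S'').
      rewrite Rabs_right by lra.
      assert (1 / IZR d'' <= 1 / IZR b'').
      { unfold Rdiv; rewrite !Rmult_1_l. apply Rinv_le_contravar.
        apply IZR_lt; lia. apply IZR_le; lia. }
      lra.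
Qed.
End Irr.

Lemma sep (alpha : R) (l : list R) : exists eps, 0 < eps /\
  forall y, In y l -> y = alpha \/ eps <= Rabs (alpha - y).
Proof.
  induction l as [|y l IH].
  - exists 1. split; [lra|]. intros y [].
  - destruct IH as [eps [He H]].
    destruct (Req_dec y alpha) as [E|E].
    + exists eps. split; auto. intros z [<-|Hz]; auto.
    + exists (Rmin eps (Rabs (alpha - y))). split.
      * apply Rmin_glb_lt; auto. apply Rabs_pos_lt. lra.
      * intros z [<-|Hz]. right; apply Rmin_r.
        destruct (H z Hz) as [?|?]; auto. right.
        eapply Rle_trans; [apply Rmin_l|]. auto.
Qed.

Theorem corollary1 (alpha : R) (Hirr : irrational alpha) :
  forall l : list R, exists r : R, good_fraction alpha r /\ ~ In r l.
Proof.
  intros l.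
  assert (Hx : forall p q : Z, q <> 0%Z -> IZR q * (4 * alpha) <> IZR p).
  { intros p q Hq E. apply Hirr. exists p, (4 * q)%Z. split; [lia|].
    rewrite mult_IZR, <- E. apply not_0_IZR in Hq. field. auto. }
  destruct (sep alpha l) as [eps [He Hs]].
  destruct (archimed (/ eps)) as [A1 A2].
  assert (0 < / eps) by (apply Rinv_0_lt_compat; auto).
  destruct (good (4 * alpha) Hx (Z.to_nat (up (/ eps)))) as
    [P [Q [OP [HQn [HQ1 [RP Hab]]]]]].
  assert (HQ : (up (/ eps) <= Q)%Z).
  { assert (0 < up (/eps))%Z by (apply lt_IZR; lra). lia. }
  apply IZR_le in HQ. apply IZR_le in HQ1.
  assert (Hbd : Rabs (alpha - IZR P / (4 * IZR Q)) < 1 / (4 * IZR Q ^ 2)).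
  { replace (alpha - IZR P / (4 * IZR Q)) with
      ((IZR Q * (4 * alpha) - IZR P) * / (4 * IZR Q)) by (field; lra).
    rewrite Rabs_mult, (Rabs_pos_eq (/ (4 * IZR Q)))
      by (left; apply Rinv_0_lt_compat; lra).
    replace (1 / (4 * IZR Q ^ 2)) with ((1 / IZR Q) * / (4 * IZR Q))
      by (field; lra).
    apply Rmult_lt_compat_r; auto. apply Rinv_0_lt_compat; lra. }
  exists (IZR P / (4 * IZR Q)). split.
  - exists P, Q. split; [auto|split; [apply Z.lt_gt, lt_IZR; lra|split; [auto|split; auto]]].
  - intro Hin. destruct (Hs _ Hin) as [E|E].
    + apply Hirr. exists P, (4 * Q)%Z. split.
      * intro Z0. assert (IZR (4 * Q) = 0) by (rewrite Z0; auto).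
        rewrite mult_IZR in H0. lra.
      * rewrite mult_IZR. auto.
    + assert (1 / (4 * IZR Q ^ 2) < eps).
      { assert (eps * IZR Q > 1).
        { apply (Rmult_lt_reg_l (/ eps)); auto.
          replace (/ eps * (eps * IZR Q)) with (IZR Q) by (field; lra).
          lra. }
        apply (Rmult_lt_reg_l (4 * IZR Q ^ 2)); [nra|].
        replace (4 * IZR Q ^ 2 * (1 / (4 * IZR Q ^ 2))) with 1
          by (field; lra). nra. }
      lra.
Qed.
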